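(* On the 36-hole square board $S=\{0,1,\dots,5\}^2$, let $b$ be a board position which is solvable and which is invariant under the $180^\circ$ rotation $(x,y)\mapsto(5-x,5-y)$. Equivalently, $b$ has one of the symmetry types 1–5: square symmetry, $90^\circ$ rotational symmetry, both diagonal reflections, both orthogonal reflections, or $180^\circ$ rotation. Then $b$ lies in position class A, the position class of the four-peg position $\{(2,2),(2,3),(3,2),(3,3)\}$.
   Context: A board position on $S=\{0,\dots,5\}^2$ is a subset of $S$ (the occupied holes). A jump: given $d\in\{(\pm1,0),(0,\pm1)\}$ and $p$ with $p,p+d,p+2d\in S$, $p,p+d$ occupied and $p+2d$ empty, the jump removes the pegs at $p,p+d$ and puts a peg at $p+2d$. A position is solvable if some sequence of jumps leads to exactly one peg. Position classes. For a position $b$ and $i\in\{0,1,2\}$ let $N_i=|\{(x,y)\in b: x+y\equiv i\pmod 3\}|$ and $M_i=|\{(x,y)\in b: x-y\equiv i\pmod 3\}|$. The position class of $b$ is the vector $$(N_1+N_2,\ N_0+N_2,\ N_0+N_1,\ M_1+M_2,\ M_0+M_2,\ M_0+M_1)\bmod 2.$$ Two positions are in the same position class iff these vectors agree. The symmetries are the dihedral group of the square acting about the centre $(2.5,2.5)$. *)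

(* Defs.v *)
From Stdlib Require Import Relations.
From HB Require Import structures.
From mathcomp Require Import all_boot.
Set Implicit Arguments. Unset Strict Implicit. Unset Printing Implicit Defensive.

Definition hole := ('I_6 * 'I_6)%type.
Definition position := {set hole}.

Definition line3 (p q r : hole) : bool :=
  let '(px, py) := (val p.1, val p.2) in
  let '(qx, qy) := (val q.1, val q.2) in
  let '(rx, ry) := (val r.1, val r.2) in
  [|| [&& qy == py, ry == py, qx == px.+1 & rx == px.+2],
      [&& qy == py, ry == py, qx.+1 == px & rx.+2 == px],
      [&& qx == px, rx == px, qy == py.+1 & ry == py.+2]
    | [&& qx == px, rx == px, qy.+1 == py & ry.+2 == py]].

Definition jump (b b' : position) : Prop :=
  exists p q r : hole,
    [/\ line3 p q r, p \in b, q \in b, r \notin b &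
        b' = ((b :\ p) :\ q) :|: [set r]].

Definition reachable : relation position := clos_refl_trans position jump.

Definition solvable (b : position) : Prop :=
  exists b' : position, reachable b b' /\ #|b'| = 1.

Definition rot180 (p : hole) : hole := (rev_ord p.1, rev_ord p.2).

Definition rot180_invariant (b : position) : Prop := rot180 @: b = b.

(* N_i and M_i counts; x - y mod 3 computed as (x + 6 - y) %% 3 since y <= 5. *)
Definition Ncount (b : position) (i : nat) : nat :=
  #|[set p in b | (val p.1 + val p.2) %% 3 == i]|.
Definition Mcount (b : position) (i : nat) : nat :=
  #|[set p in b | (val p.1 + 6 - val p.2) %% 3 == i]|.

Definition pos_class (b : position) : seq bool :=
  [:: odd (Ncount b 1 + Ncount b 2); odd (Ncount b 0 + Ncount b 2);
      odd (Ncount b 0 + Ncount b 1);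
      odd (Mcount b 1 + Mcount b 2); odd (Mcount b 0 + Mcount b 2);
      odd (Mcount b 0 + Mcount b 1)].

Definition h (x y : nat) : hole := (inord x, inord y).

Definition centre4 : position := [set h 2 2; h 2 3; h 3 2; h 3 3].
Definition classA : seq bool := pos_class centre4.

(* Main.v *)
Require Import Defs.
From mathcomp Require Import all_boot zify.

Definition rN (p : hole) : nat := (val p.1 + val p.2) %% 3.
Definition rM (p : hole) : nat := (val p.1 + 6 - val p.2) %% 3.
Definition gN i j (p : hole) : nat := (rN p == i) + (rN p == j).
Definition gM i j (p : hole) : nat := (rM p == i) + (rM p == j).
Definition S (b : position) (g : hole -> nat) := \sum_(x in b) g x.

Lemma count_sum (b : position) (P : hole -> bool) :
  #|[set p in b | P p]| = \sum_(x in b) P x.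
Proof.
rewrite -sum1_card big_mkcond [RHS]big_mkcond /=.
apply: eq_bigr => x _; rewrite !inE; by case: (x \in b); case: (P x).
Qed.

Lemma pos_classE b : pos_class b =
  [:: odd (S b (gN 1 2)); odd (S b (gN 0 2)); odd (S b (gN 0 1));
      odd (S b (gM 1 2)); odd (S b (gM 0 2)); odd (S b (gM 0 1))].
Proof.
by rewrite /pos_class /Ncount /Mcount !count_sum /S /gN /gM -!big_split.
Qed.

Lemma parity3 (a b c i j : nat) : a < 3 -> b < 3 -> c < 3 -> i < 3 -> j < 3 ->
  a != b -> a != c -> b != c -> i != j ->
  odd ((a == i) + (a == j) + ((b == i) + (b == j))) = odd ((c == i) + (c == j)).
Proof.
by case: a => [|[|[|]]] //; case: b => [|[|[|]]] //; case: c => [|[|[|]]] //;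
  case: i => [|[|[|]]] //; case: j => [|[|[|]]].
Qed.

Lemma line3_res p q r : line3 p q r ->
  [&& rN p != rN q, rN p != rN r & rN q != rN r] &&
  [&& rM p != rM q, rM p != rM r & rM q != rM r].
Proof.
rewrite /line3 /rN /rM.
case: p => [[px hpx] [py hpy]]; case: q => [[qx hqx] [qy hqy]];
case: r => [[rx hrx] [ry hry]] /=.
case/or4P => /and4P [/eqP H1 /eqP H2 /eqP H3 /eqP H4];
  apply/andP; split; apply/and3P; split; apply/eqP; lia.
Qed.

Lemma sum_jump (b : position) p q r (g : hole -> nat) :
  p \in b -> q \in b -> r \notin b -> p != q ->
  S (((b :\ p) :\ q) :|: [set r]) g + g p + g q = S b g + g r.
Proof.
move=> hp hq hr pq.
rewrite /S setUC big_setU1; last first.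
  rewrite !inE; apply/negP => /and3P [_ _ hh]; by rewrite hh in hr.
have hq' : q \in b :\ p by rewrite !inE eq_sym pq hq.
rewrite (big_setD1 p hp) (big_setD1 q hq') /=.
lia.
Qed.

Lemma odd_jump (b : position) p q r (g : hole -> nat) :
  p \in b -> q \in b -> r \notin b -> p != q ->
  odd (g p + g q) = odd (g r) ->
  odd (S (((b :\ p) :\ q) :|: [set r]) g) = odd (S b g).
Proof.
move=> hp hq hr pq hg.
have := congr1 odd (@sum_jump b p q r g hp hq hr pq).
rewrite -addnA oddD hg [odd (_ + g r)]oddD; by case: (odd (g r)); case: odd; case: odd.
Qed.

Lemma rN_lt p : rN p < 3. Proof. by rewrite ltn_pmod. Qed.
Lemma rM_lt p : rM p < 3. Proof. by rewrite ltn_pmod. Qed.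

Lemma jump_class b b' : jump b b' -> pos_class b' = pos_class b.
Proof.
case=> p [q [r [hl hp hq hr ->]]].
have /andP [/and3P [n1 n2 n3] /and3P [m1 m2 m3]] := @line3_res p q r hl.
have pq : p != q by apply: contraNneq n1 => ->.
rewrite !pos_classE.
by rewrite !(@odd_jump b p q r _ hp hq hr pq) // /gN /gM; apply: parity3; rewrite ?rN_lt ?rM_lt.
Qed.

Lemma reach_class b b' : reachable b b' -> pos_class b' = pos_class b.
Proof.
elim=> [x y /jump_class //| x // | x y z _ H1 _ H2]; by rewrite H2 H1.
Qed.

Lemma rot180K : involutive rot180.
Proof. by case=> x y; rewrite /rot180 /= !rev_ordK. Qed.

Lemma sym_even (b : position) (g : hole -> nat) :
  rot180_invariant b -> (forall x, g (rot180 x) = g x) -> ~~ odd (S b g).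
Proof.
move=> hb hg.
have memr x : (rot180 x \in b) = (x \in b).
  by rewrite -{2}hb -{2}(rot180K x) mem_imset //; apply: (can_inj rot180K).
have hH x : (val (rot180 x).1 < 3) = ~~ (val x.1 < 3).
  by case: x => [[a ha] [c hc]]; rewrite /rot180 /=; lia.
rewrite /S (bigID (fun x => val x.1 < 3)) /=.
rewrite [X in _ + X](reindex_inj (can_inj rot180K)) /=.
rewrite [X in _ + X](eq_bigl (fun x => (x \in b) && (val x.1 < 3))); last first.
  by move=> x; rewrite memr hH negbK.
under [X in _ + X]eq_bigr do rewrite hg.
by rewrite addnn odd_double.
Qed.

Lemma auxN u v : u < 3 -> v < 3 -> (u == 2) = (v == 2) ->
  (u == 0) + (u == 1) = (v == 0) + (v == 1).
Proof. by case: u => [|[|[|]]] //; case: v => [|[|[|]]]. Qed.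

Lemma auxM u v : u < 3 -> v < 3 -> (u == 0) = (v == 0) ->
  (u == 1) + (u == 2) = (v == 1) + (v == 2).
Proof. by case: u => [|[|[|]]] //; case: v => [|[|[|]]]. Qed.

Lemma rN_rot x : gN 0 1 (rot180 x) = gN 0 1 x.
Proof.
case: x => [[a ha] [c hc]]; rewrite /gN /rN /rot180 /=.
apply: auxN; rewrite ?ltn_pmod //; apply/eqP/eqP; lia.
Qed.

Lemma rM_rot x : gM 1 2 (rot180 x) = gM 1 2 x.
Proof.
case: x => [[a ha] [c hc]]; rewrite /gM /rM /rot180 /=.
apply: auxM; rewrite ?ltn_pmod //; apply/eqP/eqP; lia.
Qed.

Lemma classA_val : classA = [:: true; true; false; false; true; true].
Proof.
have ne x y x' y' : x < 6 -> y < 6 -> x' < 6 -> y' < 6 ->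
    (h x y == h x' y') = (x == x') && (y == y').
  by move=> *; rewrite /h xpair_eqE -!val_eqE /= !inordK.
have gh x y : x < 6 -> y < 6 -> rN (h x y) = (x + y) %% 3 /\ rM (h x y) = (x + 6 - y) %% 3.
  by move=> *; rewrite /rN /rM /h /= !inordK.
have hs g : \sum_(x in centre4) g x = g (h 2 2) + (g (h 2 3) + (g (h 3 2) + g (h 3 3))).
  rewrite /centre4 -!setUA !big_setU1 ?big_set1 //= !inE ?negb_or !ne //.
rewrite /classA pos_classE /S !hs.
rewrite /gN /gM.

have [-> ->] := gh 2 2 isT isT; have [-> ->] := gh 2 3 isT isT.
have [-> ->] := gh 3 2 isT isT; have [-> ->] := gh 3 3 isT isT.
by [].
Qed.

Theorem mainTheorem4 (b : position) :
  solvable b -> rot180_invariant b -> pos_class b = classA.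
Proof.
case=> b' [hr /eqP/cards1P [x Hx]] hinv; subst b'.
have hc := @reach_class _ _ hr.
rewrite classA_val -hc.
have e1 := @sym_even b (gN 0 1) hinv rN_rot.
have e2 := @sym_even b (gM 1 2) hinv rM_rot.
move: hc; rewrite !pos_classE => -[_ _ h3 h4 _ _].
rewrite -h3 in e1; rewrite -h4 in e2.
rewrite /S !big_set1 in e1 e2 *.
move: e1 e2; rewrite /gN /gM.
move: (rN_lt x) (rM_lt x).
case: (rN x) => [|[|[|]]] //; case: (rM x) => [|[|[|]]] //.
Qed.
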